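(* Let $n \ge 3$ and let $x_1, \dots, x_n \in \mathbb{R}$ be pairwise distinct, and let $h(\theta) = \prod_{j=1}^n (x_j - \theta)$. Then the maximum likelihood estimate $\hat\theta \in \mathbb{H}$ of the sample $x_1,\dots,x_n$ from the Cauchy distribution is a solution in $\mathbb{H}$ of the equation $$n h(\theta) - (\theta - \overline{\theta})\, h'(\theta) = 0.$$
   Context: $\mathbb{H} = \{\theta\in\mathbb{C}:\Im\theta>0\}$ and $\overline{\theta}$ is the complex conjugate. The Cauchy distribution with parameter $\theta = \mu + i\sigma\in\mathbb{H}$ has density $f(x;\theta) = \frac{\sigma}{\pi}\frac{1}{(x-\mu)^2+\sigma^2}$; the maximum likelihood estimate is the (unique) maximizer over $\mathbb{H}$ of $\prod_{j=1}^n f(x_j;\theta)$. *)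

(* Defs.v *)
From HB Require Import structures.
From mathcomp Require Import all_boot all_order all_algebra.
From mathcomp Require Import reals trigo.
From mathcomp Require Import complex.
Set Implicit Arguments. Unset Strict Implicit. Unset Printing Implicit Defensive.
Import Order.TTheory GRing.Theory Num.Theory.
Local Open Scope ring_scope.

Definition cauchy_density {R : realType} (theta : R[i]) (x : R) : R :=
  complex.Im theta / pi / ((x - complex.Re theta) ^+ 2 + complex.Im theta ^+ 2).

Definition in_upper_half {R : realType} (theta : R[i]) : Prop :=
  0 < complex.Im theta.

Definition cauchy_likelihood {R : realType} (n : nat) (x : 'I_n -> R)
  (theta : R[i]) : R := \prod_(j < n) cauchy_density theta (x j).

Definition is_cauchy_mle {R : realType} (n : nat) (x : 'I_n -> R)
  (theta : R[i]) : Prop :=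
  in_upper_half theta /\
  forall theta' : R[i], in_upper_half theta' ->
    cauchy_likelihood x theta' <= cauchy_likelihood x theta.

Definition hpoly {R : realType} (n : nat) (x : 'I_n -> R) : {poly R[i]} :=
  \prod_(j < n) ((x j)%:C%C%:P - 'X).

(* Main.v *)
Require Import Defs.
From HB Require Import structures.
From mathcomp Require Import all_boot all_order all_algebra.
From mathcomp Require Import reals trigo.
From mathcomp Require Import complex.
From mathcomp Require Import ring lra.
Import Order.TTheory GRing.Theory Num.Theory.
Local Open Scope ring_scope.

Notation cRe := complex.Re.
Notation cIm := complex.Im.

Lemma taylor1 {F : numDomainType} (p : {poly F}) (c : F) :
  exists M : F, 0 <= M /\ forall t, `|t| <= 1 ->
    exists e, `|e| <= M /\ p.[c + t] = p.[c] + p^`().[c] * t + t ^+ 2 * e.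
Proof.
elim/poly_ind: p => [|p a [M [M0 HM]]].
  exists 0; split => // t _; exists 0; rewrite normr0; split => //.
  by rewrite deriv0 !horner0 !(mul0r, mulr0, addr0).
exists (`|p^`().[c]| + M * (`|c| + 1)); split.
  by rewrite addr_ge0 // mulr_ge0 // addr_ge0.
move=> t Ht; have [e [He Hp]] := HM t Ht.
exists (p^`().[c] + e * (c + t)); split.
  apply: (le_trans (ler_normD _ _)); rewrite lerD2l normrM.
  apply: ler_pM => //; apply: (le_trans (ler_normD _ _)); by rewrite lerD2l.
rewrite derivMXaddC !hornerE Hp; ring.
Qed.

Lemma fermat {R : realFieldType} (c M d : R) : 0 < d ->
  (forall t, `|t| <= 1 -> `|t| < d -> exists e, e <= M /\ 0 <= t * c + t ^+ 2 * e) ->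
  c = 0.
Proof.
move=> d0 H; apply/eqP; apply/negP => /negP c0.
have cp : 0 < `|c| by rewrite normr_gt0.
have Mn := normr_ge0 M.
have Ml := ler_norm M.
have cd : 0 <= `|c| / d by rewrite divr_ge0 // ltW.
set K := 1 + `|c| + `|c| / d + `|M|.
have K0 : 0 < K by rewrite /K; lra.
set s := K^-1.
have s0 : 0 < s by rewrite invr_gt0.
have sK : s * K = 1 by rewrite mulVf // gt_eqF.
have h1 : s * `|c| <= 1.
  have : s * `|c| <= s * K by rewrite ler_pM2l // /K; lra.
  by rewrite sK.
have h2 : s * `|c| < d.
  have e1 : `|c| = (`|c| / d) * d by rewrite mulfVK // gt_eqF.
  have : s * `|c| < s * (K * d).
    by rewrite ltr_pM2l // [X in X < _]e1 ltr_pM2r // /K; lra.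
  by rewrite mulrA sK mul1r.
have h3 : s * M < 1.
  have : s * M < s * K by rewrite ltr_pM2l // /K; lra.
  by rewrite sK.
have nsc : `|- (s * c)| = s * `|c| by rewrite normrN normrM gtr0_norm.
have [e [eM He]] := H (- (s * c)) (ltac:(by rewrite nsc)) (ltac:(by rewrite nsc)).
have cc : 0 < c * c by rewrite -expr2 exprn_even_gt0.
have : (- (s * c)) * c + (- (s * c)) ^+ 2 * e <= s * (c * c) * (s * M - 1).
  have -> : (- (s * c)) * c + (- (s * c)) ^+ 2 * e = s * (c * c) * (s * e - 1) by ring.
  have scc : 0 < s * (c * c) by rewrite mulr_gt0.
  rewrite ler_pM2l //; have : s * e <= s * M by rewrite ler_pM2l.
  lra.
have : s * (c * c) * (s * M - 1) < 0.
  by rewrite (pmulr_rlt0 _ (mulr_gt0 s0 cc)) subr_lt0.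
lra.
Qed.

Lemma Ebound (R : realFieldType) (a1 a2 b1 b2 g1 g2 t G : R) :
  t ^+ 2 <= 1 -> g1 ^+ 2 + g2 ^+ 2 <= G ->
  (b1 ^+ 2 + b2 ^+ 2) + 2 * (a1 * g1 + a2 * g2) + 2 * t * (b1 * g1 + b2 * g2)
    + t ^+ 2 * (g1 ^+ 2 + g2 ^+ 2)
  <= 2 * (b1 ^+ 2 + b2 ^+ 2) + (a1 ^+ 2 + a2 ^+ 2) + 3 * G.
Proof.
move=> ht hg.
have q1 : 0 <= (a1 - g1) ^+ 2 by rewrite sqr_ge0.
have q2 : 0 <= (a2 - g2) ^+ 2 by rewrite sqr_ge0.
have q3 : 0 <= (t * b1 - g1) ^+ 2 by rewrite sqr_ge0.
have q4 : 0 <= (t * b2 - g2) ^+ 2 by rewrite sqr_ge0.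
have hb : t ^+ 2 * (b1 ^+ 2 + b2 ^+ 2) <= b1 ^+ 2 + b2 ^+ 2.
  by rewrite ler_piMl // addr_ge0 // sqr_ge0.
have hgg : t ^+ 2 * (g1 ^+ 2 + g2 ^+ 2) <= g1 ^+ 2 + g2 ^+ 2.
  by rewrite ler_piMl // addr_ge0 // sqr_ge0.
have e1 : (a1 - g1) ^+ 2 = a1 ^+ 2 + g1 ^+ 2 - 2 * (a1 * g1) by ring.
have e2 : (a2 - g2) ^+ 2 = a2 ^+ 2 + g2 ^+ 2 - 2 * (a2 * g2) by ring.
have e3 : (t * b1 - g1) ^+ 2 + (t * b2 - g2) ^+ 2
   = t ^+ 2 * (b1 ^+ 2 + b2 ^+ 2) + (g1 ^+ 2 + g2 ^+ 2) - 2 * t * (b1 * g1 + b2 * g2) by ring.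
lra.
Qed.

Lemma mulcJ_sq (R : realType) (z : R[i]) : z * (z^*)%C = ((cRe z ^+2 + cIm z ^+2)%:C)%C.
Proof. case: z => a b /=. apply/eqP; rewrite eq_complex /=. apply/andP; split; apply/eqP; ring. Qed.

Lemma ReD' (R : realType) (a b : R[i]) : cRe (a + b) = cRe a + cRe b. Proof. by case: a; case: b. Qed.
Lemma ImD' (R : realType) (a b : R[i]) : cIm (a + b) = cIm a + cIm b. Proof. by case: a; case: b. Qed.
Lemma ReM' (R : realType) (t : R) (b : R[i]) : cRe ((t%:C)%C * b) = t * cRe b.
Proof. case: b => ? ? /=; ring. Qed.
Lemma ImM' (R : realType) (t : R) (b : R[i]) : cIm ((t%:C)%C * b) = t * cIm b.
Proof. case: b => ? ? /=; ring. Qed.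

Definition Aq {R : realType} {n : nat} (x : 'I_n -> R) (z : R[i]) : R :=
  \prod_(j < n) ((x j - cRe z) ^+ 2 + cIm z ^+ 2).

Lemma hornerh {R : realType} {n} (x : 'I_n -> R) z :
  (hpoly x).[z] = \prod_(j < n) (((x j)%:C)%C - z).
Proof. by rewrite /hpoly horner_prod; apply: eq_bigr => j _; rewrite !hornerE. Qed.

Lemma AJ {R : realType} {n} (x : 'I_n -> R) z :
  ((Aq x z)%:C)%C = (hpoly x).[z] * (((hpoly x).[z])^*)%C.
Proof.
rewrite /Aq hornerh !rmorph_prod -big_split /=.
apply: eq_bigr => j _; rewrite mulcJ_sq; congr (_%:C)%C.
by case: z => a b /=; ring.
Qed.

Lemma Apos {R : realType} {n} (x : 'I_n -> R) z : 0 < cIm z -> 0 < Aq x z.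
Proof.
move=> hz; rewrite /Aq; apply: prodr_gt0 => j _.
have : 0 < cIm z ^+ 2 by rewrite exprn_gt0.
have := sqr_ge0 (x j - cRe z); lra.
Qed.

Lemma likE {R : realType} {n} (x : 'I_n -> R) z :
  cauchy_likelihood x z = (cIm z / pi) ^+ n / Aq x z.
Proof.
rewrite /cauchy_likelihood /cauchy_density prodf_div; congr (_ / _).
by rewrite prodr_const card_ord.
Qed.

Lemma cross (R : realType) (a c b d k : R) : 0 < b -> 0 < d -> 0 < k ->
  (a * k) / b <= (c * k) / d -> a * d <= c * b.
Proof.
move=> b0 d0 k0 H.
have := ler_wpM2r (ltW (mulr_gt0 (mulr_gt0 b0 d0) k0)) H.
have -> : a * k / b * (b * d * k) = (a * d) * (k * k) by field; rewrite gt_eqF.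
have -> : c * k / d * (b * d * k) = (c * b) * (k * k) by field; rewrite gt_eqF.
by rewrite ler_pM2r // mulr_gt0.
Qed.

Lemma L4 {R : realType} {n} (x : 'I_n -> R) theta z :
  is_cauchy_mle x theta -> 0 < cIm z ->
  cIm z ^+ n * Aq x theta <= cIm theta ^+ n * Aq x z.
Proof.
move=> [h0 hm] hz; have := hm z hz; rewrite !likE !exprMn.
apply: cross; [exact: Apos | exact: Apos | ].
by rewrite exprn_gt0 // invr_gt0 pi_gt0.
Qed.

Lemma dir_expand {R : realType} (p : {poly R[i]}) (th w : R[i]) :
  cRe w ^+ 2 + cIm w ^+ 2 = 1 ->
  exists M : R, forall t : R, `|t| <= 1 -> exists E, E <= M /\
    cRe p.[th + (t%:C)%C * w] ^+ 2 + cIm p.[th + (t%:C)%C * w] ^+ 2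
    = (cRe p.[th] ^+ 2 + cIm p.[th] ^+ 2)
      + t * (2 * (cRe p.[th] * cRe (p^`().[th] * w) + cIm p.[th] * cIm (p^`().[th] * w)))
      + t ^+ 2 * E.
Proof.
move=> hw.
have [M1 [M10 HM]] := taylor1 p th.
set u := p.[th]; set v := p^`().[th].
have M1r : M1 = ((cRe M1)%:C)%C by rewrite RRe_real // ger0_real.
set G := cRe M1 ^+ 2.
exists (2 * (cRe (v * w) ^+ 2 + cIm (v * w) ^+ 2) + (cRe u ^+ 2 + cIm u ^+ 2) + 3 * G).
move=> t ht.
have nw : `|w| = 1 by rewrite normc_def hw sqrtr1.
have ntw : `|(t%:C)%C * w| <= 1.
  by rewrite normrM nw mulr1 normc_def /= expr0n /= addr0 sqrtr_sqr lecE /= eqxx.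
have [e [He Hp]] := HM _ ntw.
set g := w ^+ 2 * e.
have HP : p.[th + (t%:C)%C * w] = u + (t%:C)%C * (v * w) + ((t ^+ 2)%:C)%C * g.
  by rewrite Hp rmorphXn /= /g /u /v; ring.
have hg : cRe g ^+ 2 + cIm g ^+ 2 <= G.
  rewrite -lecR -mulcJ_sq.
  have -> : g * (g^*)%C = (w * (w^*)%C) ^+ 2 * (e * (e^*)%C).
    by rewrite /g rmorphM rmorphXn /=; ring.
  rewrite !mulcJ_sq hw rmorph1 expr1n mul1r add_Re2_Im2 /G rmorphXn /= -M1r !expr2.
  by apply: ler_pM => //; apply: normr_ge0.
have ht2 : t ^+ 2 <= 1.
  by rewrite -real_normK ?num_real // expr_le1.
exists ((cRe (v * w) ^+ 2 + cIm (v * w) ^+ 2) + 2 * (cRe u * cRe g + cIm u * cIm g)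
   + 2 * t * (cRe (v * w) * cRe g + cIm (v * w) * cIm g) + t ^+ 2 * (cRe g ^+ 2 + cIm g ^+ 2)).
split; first exact: Ebound.
rewrite HP !ReD' !ImD' !ReM' !ImM'; ring.
Qed.

Lemma AE {R : realType} {n} (x : 'I_n -> R) z :
  Aq x z = cRe (hpoly x).[z] ^+ 2 + cIm (hpoly x).[z] ^+ 2.
Proof. by apply: complexI; rewrite AJ mulcJ_sq. Qed.

Lemma final_alg {R : realType} (N : R) (u v th : R[i]) :
  cRe u * cRe v + cIm u * cIm v = 0 ->
  cIm th * (2 * (cRe u * - cIm v + cIm u * cRe v)) = N * (cRe u ^+ 2 + cIm u ^+ 2) ->
  (u^*)%C * ((N%:C)%C * u - (th - (th^*)%C) * v) = 0.
Proof.
case: u => a b; case: v => p q; case: th => m s /= E1 E2.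
apply/eqP; rewrite eq_complex /=; apply/andP; split; apply/eqP.
  have -> : a * (N * a - 0 * b - ((m - m) * p - (s - - s) * q)) -
   - b * (N * b + 0 * a - ((m - m) * q + (s - - s) * p)) = N * (a ^+ 2 + b ^+ 2) - s * (2 * (a * - q + b * p)) by ring.
  by rewrite E2 subrr.
have -> : a * (N * b + 0 * a - ((m - m) * q + (s - - s) * p)) +
   - b * (N * a - 0 * b - ((m - m) * p - (s - - s) * q)) = - (2 * s) * (a * p + b * q) by ring.
by rewrite E1 mulr0.
Qed.

Theorem mainTheorem5 (R : realType) (n : nat) (x : 'I_n -> R)
  (hn : (3 <= n)%N) (hx : injective x) (theta : R[i])
  (hmle : is_cauchy_mle x theta) :
  n%:R * (hpoly x).[theta] - (theta - (theta^*)%C) * ((hpoly x)^`()).[theta] = 0.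
Proof.
have [s0 _] := hmle.
move: s0; rewrite /in_upper_half => s0.
set s := cIm theta in s0.
set u := (hpoly x).[theta]; set v := ((hpoly x)^`()).[theta].
have sn0 : 0 < s ^+ n by rewrite exprn_gt0.
have A0 := Apos x theta s0.
have [M1 HM1] := dir_expand (hpoly x) theta 1 (ltac:(by rewrite /= expr1n expr0n addr0)).
have c1 : 2 * (cRe u * cRe (v * 1) + cIm u * cIm (v * 1)) = 0.
  apply: (@fermat _ _ M1 1 ltr01) => t ht _.
  have [E [EM HE]] := HM1 t ht; exists E; split => //.
  have hz : cIm (theta + (t%:C)%C * 1) = s by rewrite ImD' ImM' /= mulr0 addr0.
  have := L4 x theta (theta + (t%:C)%C * 1) hmle (ltac:(by rewrite hz)).
  rewrite hz ler_pM2l // !AE HE -/u -/v.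
  lra.
have [Mi HMi] := dir_expand (hpoly x) theta 'i%C (ltac:(by rewrite /= expr1n expr0n add0r)).
have [M2 [M20 HM2]] := taylor1 ('X^n : {poly R}) s.
have ci : s ^+ n * (2 * (cRe u * cRe (v * 'i%C) + cIm u * cIm (v * 'i%C)))
          - (s ^+ n.-1 *+ n) * Aq x theta = 0.
  apply: (@fermat _ _ (s ^+ n * Mi + M2 * Aq x theta) s s0) => t ht hts.
  have [E [EM HE]] := HMi t ht.
  have [f [hf Hf]] := HM2 t ht.
  rewrite derivXn hornerMn !hornerXn in Hf.
  exists (s ^+ n * E - f * Aq x theta); split.
    have : s ^+ n * E <= s ^+ n * Mi by rewrite ler_pM2l.
    have : - f * Aq x theta <= M2 * Aq x theta.
      by rewrite ler_pM2r //; apply: le_trans hf; rewrite -normrN ler_norm.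
    rewrite mulNr; lra.
  have hz : cIm (theta + (t%:C)%C * 'i%C) = s + t by rewrite ImD' ImM' /= mulr1.
  have st : 0 < s + t.
    have := ler_norm (- t); rewrite normrN; lra.
  have := L4 x theta (theta + (t%:C)%C * 'i%C) hmle (ltac:(by rewrite hz)).
  rewrite hz Hf !AE HE -/u -/v -!AE.
  set D := s ^+ n.-1 *+ n; set cc := 2 * _.
  set Ath := Aq x theta; set SN := s ^+ n.
  move=> H.
  have -> : t * (SN * cc - D * Ath) + t ^+ 2 * (SN * E - f * Ath)
     = SN * (Ath + t * cc + t ^+ 2 * E) - (SN + D * t + t ^+ 2 * f) * Ath by ring.
  by rewrite subr_ge0.
rewrite mulr1 in c1.
rewrite ReiNIm ImiRe in ci.
have n0 : (0 < n)%N by apply: leq_trans hn.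
have eS : s ^+ n = s * s ^+ n.-1 by rewrite -exprS prednK.
have sk0 : s ^+ n.-1 != 0 by rewrite gt_eqF // exprn_gt0.
have E2 : s * (2 * (cRe u * - cIm v + cIm u * cRe v)) = n%:R * Aq x theta.
  apply/eqP; rewrite -subr_eq0; apply/eqP.
  have : s ^+ n.-1 * (s * (2 * (cRe u * - cIm v + cIm u * cRe v)) - n%:R * Aq x theta) = 0.
    by rewrite -ci eS -mulr_natr; ring.
  by move/eqP; rewrite mulf_eq0 (negbTE sk0) /= => /eqP.
have E1 : cRe u * cRe v + cIm u * cIm v = 0.
  by move: c1; lra.
rewrite AE -/u in E2.
have u0 : (u^*)%C != 0.
  rewrite conjc_eq0; apply/eqP => u0.
  have := AJ x theta; rewrite -/u u0 mul0r -(rmorph0 (real_complex R)) => /complexI.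
  by move/eqP; rewrite (gt_eqF A0).
apply: (mulfI u0); rewrite mulr0.
have -> : (n%:R : R[i]) = (((n%:R : R))%:C)%C by rewrite rmorph_nat.
exact: final_alg.
Qed.
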